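(* Let $(C^\bullet,\partial)$ be a complex of finite-dimensional complex vector spaces of odd length $d=2r-1$ with a chirality operator $\Gamma$, let $\mathcal B=\Gamma\partial+\partial\Gamma$, and let $\mathcal I\subset[0,\infty)$ be an interval. For $j=0,\dots,d$ let $C^j_{\mathcal I}\subset C^j$ be the span of the generalized eigenvectors of the restriction of $\mathcal B^2$ to $C^j$ corresponding to eigenvalues $\lambda$ with $|\lambda|\in\mathcal I$, and let $\partial_{\mathcal I}$ be the restriction of $\partial$ to $C^\bullet_{\mathcal I}$ (which is a subcomplex). If $0\notin\mathcal I$, then the complex $(C^\bullet_{\mathcal I},\partial_{\mathcal I})$ is acyclic.
   Context: A chirality operator is an involution $\Gamma:C^\bullet\to C^\bullet$ with $\Gamma(C^j)=C^{d-j}$ for all $j$. *)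

(* Defs.v *)
From HB Require Import structures.
From mathcomp Require Import all_boot all_order all_algebra.
From mathcomp Require Import complex.
From mathcomp Require Import reals.
Set Implicit Arguments. Unset Strict Implicit. Unset Printing Implicit Defensive.
Import Order.TTheory GRing.Theory Num.Theory.
Local Open Scope ring_scope.

(* v (a row vector, maps act on the right) is a generalized eigenvector of A
   for the eigenvalue lam (zero vector allowed; it does not affect spans). *)
Definition gen_eigvec (K : fieldType) (N : nat) (A : 'M[K]_N) (lam : K)
  (v : 'rV[K]_N) : Prop :=
  exists k : nat, v *m (A - lam%:M) ^+ k = 0.

(* v lies in the span of the generalized eigenvectors of the restriction of
   A to the (A-stable) subspace Cj, for eigenvalues lam satisfying P lam. *)
Definition spectral_span (K : fieldType) (N : nat) (Cj A : 'M[K]_N)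
  (P : K -> Prop) (v : 'rV[K]_N) : Prop :=
  exists s : seq (K * 'rV[K]_N),
    (forall p, p \in s -> [/\ (p.2 <= Cj)%MS, P p.1 & gen_eigvec A p.1 p.2])
    /\ v = \sum_(p <- s) p.2.

(* Main.v *)
From HB Require Import structures.
From mathcomp Require Import all_boot all_order all_algebra.
From mathcomp Require Import complex.
From mathcomp Require Import reals.
Require Import Defs.
From mathcomp Require Import zify.
Import Order.TTheory GRing.Theory Num.Theory.
Local Open Scope ring_scope.

Section Aux.
Variables (F : fieldType) (r N : nat) (C : 'I_(r.*2) -> 'M[F]_N) (D G : 'M[F]_N).
Hypothesis r_gt0 : (0 < r)%N.
Hypothesis hDD : D *m D = 0.
Hypothesis hD : forall j : 'I_(r.*2), (C j *m D <= \sum_(k < r.*2 | k == j.+1 :> nat) C k)%MS.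
Hypothesis hGG : G *m G = 1%:M.
Hypothesis hG : forall j : 'I_(r.*2), (C j *m G == C (rev_ord j))%MS.

Definition S (m : nat) := (\sum_(k < r.*2 | k == m :> nat) C k)%MS.

Lemma SC (i : 'I_(r.*2)) : S i = C i.
Proof.
rewrite /S (eq_bigl (fun k => k == i)) ?big_pred1_eq //.
Qed.

Lemma S0 m : (r.*2 <= m)%N -> S m = 0.
Proof.
move=> hm; rewrite /S big_pred0 // => k.
by rewrite ltn_eqF // (leq_trans (ltn_ord k) hm).
Qed.

Lemma SD m : (S m *m D <= S m.+1)%MS.
Proof.
case: (ltnP m r.*2) => h.
  by rewrite -[m]/(nat_of_ord (Ordinal h)) SC; apply: hD.
by rewrite S0 // mul0mx sub0mx.
Qed.

Lemma SG m : (S m *m G <= S (r.*2 - m.+1))%MS.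
Proof.
case: (ltnP m r.*2) => h.
  rewrite -[m]/(nat_of_ord (Ordinal h)) SC.
  case/andP: (hG (Ordinal h)) => h1 _.
  by rewrite -[(r.*2 - _)%N]/(nat_of_ord (rev_ord (Ordinal h))) SC.
by rewrite S0 // mul0mx sub0mx.
Qed.

Lemma S0GD : S 0 *m G *m D = 0.
Proof.
apply/eqP; rewrite -submx0.
rewrite -(@S0 r.*2 (leqnn _)).
have -> : r.*2 = (r.*2 - 1).+1 by rewrite subn1 prednK // double_gt0.
exact: submx_trans (submxMr _ (SG 0)) (SD _).
Qed.

Lemma SGDG m : (S m.+1 *m G *m D *m G <= S m)%MS.
Proof.
case: (ltnP m.+1 r.*2) => h; last by rewrite S0 // !mul0mx sub0mx.
apply: submx_trans (submxMr _ (submxMr _ (SG _))) _.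
apply: submx_trans (submxMr _ (SD _)) _.
apply: submx_trans (SG _) _.
have -> : (r.*2 - (r.*2 - m.+2).+2 = m)%N by lia.
by [].
Qed.

Definition A := locked (G *m D *m G *m D + D *m G *m D *m G).
Lemma Adef : A = G *m D *m G *m D + D *m G *m D *m G.
Proof. by rewrite /A -lock. Qed.

Lemma BB : (G *m D + D *m G) *m (G *m D + D *m G) = A.
Proof.
rewrite Adef.
rewrite !mulmxDl !mulmxDr !mulmxA.
have e1 : G *m D *m D *m G = 0 by rewrite -(mulmxA G) hDD mulmx0 mul0mx.
have e2 : D *m G *m G *m D = 0 by rewrite -(mulmxA D) hGG mulmx1 hDD.
by rewrite e1 e2 addr0 add0r.
Qed.

Lemma CA (i : 'I_(r.*2)) : (C i *m A <= C i)%MS.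
Proof.
rewrite Adef mulmxDr; apply: addmx_sub; rewrite !mulmxA -SC.
  case: i => [[|m] hm] /=.
    by rewrite S0GD !mul0mx sub0mx.
  exact: submx_trans (submxMr _ (SGDG _)) (SD _).
by rewrite -!(mulmxA (S i *m D)); rewrite !mulmxA; exact: submx_trans (submxMr _ (submxMr _ (submxMr _ (SD _)))) (SGDG _).
Qed.

Definition good (M : 'M[F]_N) :=
  [/\ M *m D = D *m M, M *m G = G *m M, M *m A = A *m M &
      forall i, (C i *m M <= C i)%MS].

Lemma goodA : good A.
Proof.
split => //; last exact: CA.
  rewrite Adef mulmxDl mulmxDr -!mulmxA hDD !mulmx0 add0r.
  by rewrite !mulmxA hDD !mul0mx addr0.
rewrite Adef mulmxDl mulmxDr -!mulmxA hGG mulmx1.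
rewrite !mulmxA hGG mul1mx addrC.
by rewrite -!mulmxA.
Qed.

Lemma good_scalar a : good a%:M.
Proof.
split; rewrite ?scalar_mxC //.
by move=> i; rewrite mul_mx_scalar scalemx_sub.
Qed.

Lemma goodD {M1 M2} : good M1 -> good M2 -> good (M1 + M2).
Proof.
case=> a1 b1 c1 d1 [a2 b2 c2 d2]; split.
- by rewrite mulmxDl mulmxDr a1 a2.
- by rewrite mulmxDl mulmxDr b1 b2.
- by rewrite mulmxDl [A *m _]mulmxDr c1 c2.
- by move=> i; rewrite mulmxDr addmx_sub.
Qed.

Lemma goodN {M1} : good M1 -> good (- M1).
Proof.
case=> a1 b1 c1 d1; split.
- by rewrite mulNmx mulmxN a1.
- by rewrite mulNmx mulmxN b1.
- by rewrite mulNmx mulmxN c1.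
- by move=> i; rewrite mulmxN eqmx_opp.
Qed.

Lemma goodM {M1 M2} : good M1 -> good M2 -> good (M1 *m M2).
Proof.
case=> a1 b1 c1 d1 [a2 b2 c2 d2]; split.
- by rewrite -mulmxA a2 !mulmxA a1.
- by rewrite -mulmxA b2 !mulmxA b1.
- by rewrite -mulmxA c2 !mulmxA c1.
- by move=> i; rewrite mulmxA; exact: submx_trans (submxMr _ (d1 i)) (d2 i).
Qed.

Lemma goodZ a M1 : good M1 -> good (a *: M1).
Proof.
move=> h; rewrite -mul_scalar_mx; exact: goodM (good_scalar a) h.
Qed.

Lemma expand lam k : exists T, good T /\ (A - lam%:M) ^+ k = ((-lam) ^+ k)%:M + A *m T.
Proof.
elim: k => [|k [T [gT IH]]].
  by exists 0%:M; split; [exact: good_scalar | rewrite expr0 mul_mx_scalar scale0r addr0].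
exists (((-lam) ^+ k)%:M + T *m A - lam *: T); split.
  by apply: goodD; [apply: goodD; [apply: good_scalar | apply: goodM gT goodA] | apply/goodN/goodZ].
rewrite exprSr IH -mulmxE exprSr scalar_mxM.
set c := (-lam) ^+ k.
rewrite mulmxDl !mulmxDr !mulmxN.
rewrite !mul_scalar_mx !mul_mx_scalar scalemxAr !mulmxA.
have -> : (-lam)%:M = - lam%:M :> 'M[F]_N by rewrite raddfN.
by rewrite scalerN !addrA (addrC (- _)).
Qed.

Lemma comm_pow M lam k : M *m A = A *m M ->
  M *m (A - lam%:M) ^+ k = (A - lam%:M) ^+ k *m M.
Proof.
move=> hA.
have h : GRing.comm M (A - lam%:M).
  by rewrite /GRing.comm -!mulmxE mulmxBr mulmxBl hA scalar_mxC.
by have := commrX k h; rewrite /GRing.comm -!mulmxE.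
Qed.

Lemma prod (s : seq (F * 'rV[F]_N)) :
  (forall p, p \in s -> p.1 != 0 /\ gen_eigvec A p.1 p.2) ->
  exists c T, [/\ c != 0, good T & forall p, p \in s -> p.2 *m (c%:M + A *m T) = 0].
Proof.
elim: s => [|p s IH] hs.
  by exists 1, 0%:M; split => //; [exact: oner_neq0 | exact: good_scalar].
have [c [T [c0 gT h]]] : exists c T, [/\ c != 0, good T & forall p, p \in s -> p.2 *m (c%:M + A *m T) = 0].
  by apply: IH => p0 hp0; apply: hs; rewrite inE hp0 orbT.
have [l0 [k hk]] := hs p (mem_head _ _).
have [T1 [gT1 e]] := expand p.1 k.
set c1 := (- p.1) ^+ k in e.
have gM : good (c%:M + A *m T) by apply: goodD; [apply: good_scalar | apply: goodM goodA gT].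
exists (c1 * c), (c1 *: T + c *: T1 + T1 *m A *m T); split.
- by rewrite mulf_neq0 // expf_neq0 // oppr_eq0.
- apply: goodD; last exact: (goodM (goodM gT1 goodA) gT).
  by apply: goodD; apply: goodZ.
have E : (c1 * c)%:M + A *m (c1 *: T + c *: T1 + T1 *m A *m T) =
         (A - p.1%:M) ^+ k *m (c%:M + A *m T).
  rewrite e mulmxDl !mulmxDr !mul_scalar_mx !mul_mx_scalar.
  by rewrite -!scalemxAr scale_scalar_mx !mulmxA !addrA.
move=> p0; rewrite inE => /orP [/eqP -> | hp0].
  by rewrite E mulmxA hk mul0mx.
by case: gM => _ _ gMA _; rewrite E -comm_pow // mulmxA h // mul0mx.
Qed.

Lemma main_aux (P : F -> Prop) (hP : forall lam, P lam -> lam != 0)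
  (j : 'I_(r.*2)) v :
  spectral_span (C j) A P v -> v *m D = 0 ->
  v = 0 \/ exists (i : 'I_(r.*2)) w,
    i.+1 = j :> nat /\ spectral_span (C i) A P w /\ w *m D = v.
Proof.
case=> s [hs hv] vD.
have [c [T [c0 gT hM]]] := @prod s (fun p hp => let: And3 _ h1 h2 := hs p hp in conj (hP _ h1) h2).
set Q := (- c^-1) *: T.
have gQ : good Q by apply: goodZ.
have vQ : v = v *m A *m Q.
  have : v *m (c%:M + A *m T) = 0.
    by rewrite hv mulmx_suml big1_seq // => p /andP[_ hp]; apply: hM.
  rewrite mulmxDr mul_mx_scalar mulmxA => /eqP; rewrite addr_eq0 => /eqP e.
  by rewrite /Q -scalemxAr -[v *m A *m T]opprK -e scaleNr scalerN opprK scalerA mulVf // scale1r.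
have vX : v = v *m (G *m D *m G *m Q) *m D.
  case: gQ => QD _ _ _.
  rewrite {1}vQ Adef mulmxDr mulmxDl !mulmxA vD !mul0mx addr0.
  by rewrite -!mulmxA -QD.
have vC : (v <= C j)%MS by rewrite hv big_seq; apply: summx_sub => p hp; case: (hs p hp).
have [GA DA] : G *m A = A *m G /\ D *m A = A *m D by case: goodA.
have QA : Q *m A = A *m Q by case: gQ.
have cm : forall X Y : 'M_N, X *m A = A *m X -> Y *m A = A *m Y -> (X *m Y) *m A = A *m (X *m Y).
  by move=> X Y hX hY; rewrite -mulmxA hY mulmxA hX -mulmxA.
have XA := cm _ _ (cm _ _ (cm _ _ GA DA) GA) QA.
move: vC vX; case: j hs => [[|i] hi] /= hs vC vX.
  left; rewrite vX.
  have : (v *m G *m D <= S 0 *m G *m D)%MS by rewrite !submxMr // (SC (Ordinal hi)).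
  rewrite S0GD submx0 => /eqP h.
  by rewrite !mulmxA h !mul0mx.
right; exists (Ordinal (ltnW hi)), (v *m (G *m D *m G *m Q)); split => //; split => //.
exists [seq (p.1, p.2 *m (G *m D *m G *m Q)) | p <- s]; split; last first.
  by rewrite hv mulmx_suml big_map.
move=> q /mapP [p hp ->] /=; case: (hs p hp) => h1 h2 [k hk]; split => //.
- case: gQ => _ _ _ /(_ (Ordinal (ltnW hi))) hQ.
  apply: submx_trans _ hQ; rewrite !mulmxA; apply: submxMr.
  have -> : C (Ordinal (ltnW hi)) = S i by rewrite -SC.
  apply: submx_trans (SGDG _); rewrite !submxMr //.
  by rewrite -[i.+1]/(nat_of_ord (Ordinal hi)) SC.
- by exists k; rewrite -mulmxA comm_pow // mulmxA hk mul0mx.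
Qed.
End Aux.

(* The complex C^0 -> ... -> C^d, d = 2r-1, is encoded as the total space
   'rV_N = (+)_j C^j, with C j : 'M_N the row space of C^j (j : 'I_(2r)),
   differential D and chirality operator G (maps act on the right). *)
Theorem lemma5p5 (R : realType) (r N : nat) (C : 'I_(r.*2) -> 'M[R[i]]_N)
  (D G : 'M[R[i]]_N) (I : interval R) :
  (0 < r)%N ->
  mxdirect (\sum_(j < r.*2) C j) ->
  (\sum_(j < r.*2) C j == 1%:M)%MS ->
  D *m D = 0 ->
  (forall j : 'I_(r.*2), (C j *m D <= \sum_(k < r.*2 | k == j.+1 :> nat) C k)%MS) ->
  G *m G = 1%:M ->
  (forall j : 'I_(r.*2), (C j *m G == C (rev_ord j))%MS) ->
  (I <= `[0, +oo[)%O ->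
  0 \notin I ->
  let B := G *m D + D *m G in
  let CI := fun j : 'I_(r.*2) =>
    spectral_span (C j) (B *m B) (fun lam => complex.Re `|lam| \in I) in
  forall (j : 'I_(r.*2)) (v : 'rV[R[i]]_N),
    CI j v -> v *m D = 0 ->
    v = 0 \/ exists (i : 'I_(r.*2)) (w : 'rV[R[i]]_N),
               i.+1 = j :> nat /\ CI i w /\ w *m D = v.
Proof.
move=> r0 _ _ hDD hD hGG hG _ h0 B CI j v.
rewrite /CI /B (BB _ _ _ _ hDD hGG) => hv vD.
have hP : forall lam : R[i], complex.Re `|lam| \in I -> lam != 0.
  move=> lam hl; apply/eqP => l0; move: hl; rewrite l0 normr0 /=.
  by move/negP: h0.
exact: (main_aux _ _ _ _ _ _ r0 hDD hD hGG hG _ hP _ _ hv vD).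
Qed.
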